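(* In the setting of the set-expansion estimator (fix $A\in[0,1]^{|\mathcal F|\times M}$, $\boldsymbol\beta\in[0,1]^{|\mathcal F|}$, $D=\mathrm{diag}(1,\dots,M)$, $C>0$, with $\mathcal F_0=\{\mathbf w: A\mathbf w=\boldsymbol\beta,\ \mathbf 0\le\mathbf w\le C\mathbf 1\}\ne\emptyset$; $\theta_{\min},\theta_{\max}$ the min and max of $\mathbf 1^\top AD(\mathbf w+\mathbf 1)$ over $\mathcal F_0$; random estimators $\hat A_n,\hat{\boldsymbol\beta}_n$ with entrywise maximal errors $O_p(n^{-1/2})$; $\hat m_n=\min_{\mathbf 0\le\mathbf w\le C\mathbf 1}\|\hat A_n\mathbf w-\hat{\boldsymbol\beta}_n\|_\infty$; and $\hat\theta_{n,\min}$, $\hat\theta_{n,\max}$ the min and max of $\mathbf 1^\top\hat A_nD(\mathbf w+\mathbf 1)$ over $\{\mathbf w:\|\hat A_n\mathbf w-\hat{\boldsymbol\beta}_n\|_\infty\le\hat m_n+\kappa_n/\sqrt n,\ \mathbf 0\le\mathbf w\le C\mathbf 1\}$), suppose moreover that $A$ has full column rank and that the deterministic sequence $\kappa_n>0$ is bounded (e.g. constant). Then \[\hat\theta_{n,\min}-\theta_{\min}=O_p\Big(\frac1{\sqrt n}\Big),\qquad\hat\theta_{n,\max}-\theta_{\max}=O_p\Big(\frac1{\sqrt n}\Big).\]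
   Context: In the application $A=A_x=[\mathbb{P}(R=1,F=f,Y=y\mid X=x)]_{f,y}$, $\boldsymbol\beta=\boldsymbol\beta_x=(\mathbb{P}(R=0,F=f\mid X=x))_f$ for a fixed stratum $x$, and $n$ is the stratum sample size; full column rank of $A_x$ corresponds to point identification of $\mathbb{E}[Y\mid X=x]$. $\|\cdot\|_\infty$ is the max-absolute-entry norm. *)

(* Defs.v *)
From HB Require Import structures.
From mathcomp Require Import all_boot all_order all_algebra.
From mathcomp Require Import all_classical all_reals all_analysis.
Set Implicit Arguments. Unset Strict Implicit. Unset Printing Implicit Defensive.
Import Order.TTheory GRing.Theory Num.Theory.
Local Open Scope classical_set_scope.
Local Open Scope ring_scope.

Section Defs.
Variable R : realType.

Definition mxinf (p q : nat) (X : 'M[R]_(p, q)) : R :=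
  \big[Num.max/0]_(i < p) \big[Num.max/0]_(j < q) `|X i j|.

Definition Dmx (m : nat) : 'M[R]_m := diag_mx (\row_(j < m) (j.+1)%:R).

Definition box (m : nat) (C : R) (w : 'cV[R]_m) : Prop :=
  forall j, 0 <= w j 0 /\ w j 0 <= C.

Definition obj (k m : nat) (A : 'M[R]_(k, m)) (w : 'cV[R]_m) : R :=
  ((const_mx 1 : 'rV[R]_k) *m A *m Dmx m *m (w + const_mx 1)) 0 0.

Definition F0 (k m : nat) (A : 'M[R]_(k, m)) (b : 'cV[R]_k) (C : R) :
  set 'cV[R]_m := [set w | A *m w = b /\ box C w].

Definition theta_min k m (A : 'M[R]_(k, m)) b C : R := inf [set obj A w | w in F0 A b C].
Definition theta_max k m (A : 'M[R]_(k, m)) b C : R := sup [set obj A w | w in F0 A b C].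

Definition mhat k m (A : 'M[R]_(k, m)) (b : 'cV[R]_k) (C : R) : R :=
  inf [set mxinf (A *m w - b) | w in box C].

(* relaxed feasible set with slack t = kappa_n / sqrt n *)
Definition Fhat k m (A : 'M[R]_(k, m)) (b : 'cV[R]_k) (C t : R) : set 'cV[R]_m :=
  [set w | mxinf (A *m w - b) <= mhat A b C + t /\ box C w].

Definition thetahat_min k m (A : 'M[R]_(k, m)) b C t : R :=
  inf [set obj A w | w in Fhat A b C t].
Definition thetahat_max k m (A : 'M[R]_(k, m)) b C t : R :=
  sup [set obj A w | w in Fhat A b C t].

Definition Op {d : measure_display} {T : measurableType d}
  (P : probability T R) (X : nat -> T -> R) (r : nat -> R) : Prop :=
  forall eps : R, 0 < eps -> exists Mb : R, exists N : nat,
    forall n, (N <= n)%N -> exists E : set T,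
      measurable E /\ (P (~` E) <= eps%:E)%E /\
      forall om, E om -> `|X n om| <= Mb * r n.

End Defs.

Definition rate (R : realType) (n : nat) : R := (Num.sqrt (n%:R : R))^-1.

(* Main.v *)
Require Import Defs.
From HB Require Import structures.
From mathcomp Require Import all_boot all_order all_algebra.
From mathcomp Require Import all_classical all_reals all_analysis.
From mathcomp Require Import ring lra.
Set Implicit Arguments. Unset Strict Implicit. Unset Printing Implicit Defensive.
Import Order.TTheory GRing.Theory Num.Theory.
Local Open Scope classical_set_scope.
Local Open Scope ring_scope.

Section S1.
Variable R : realType.

Lemma mxinf_ge0 p q (X : 'M[R]_(p, q)) : 0 <= mxinf X.
Proof.
rewrite /mxinf; elim/big_ind: _ => //.
- by move=> x y hx hy; rewrite le_max hx.
- move=> i _; elim/big_ind: _ => //.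
  by move=> x y hx hy; rewrite le_max hx.
Qed.

Lemma mxinf_entry p q (X : 'M[R]_(p, q)) i j : `|X i j| <= mxinf X.
Proof.
rewrite /mxinf.
apply: le_trans (le_bigmax _ _ i).
exact: (le_bigmax _ _ j).
Qed.

Lemma mxinf_le p q (X : 'M[R]_(p, q)) c : 0 <= c ->
  (forall i j, `|X i j| <= c) -> mxinf X <= c.
Proof.
move=> c0 H; rewrite /mxinf; apply: bigmax_le => // i _.
by apply: bigmax_le => // j _.
Qed.
End S1.

Section S2.
Variable R : realType.

Lemma mxinfD p q (X Y : 'M[R]_(p, q)) : mxinf (X + Y) <= mxinf X + mxinf Y.
Proof.
apply: mxinf_le; first by rewrite addr_ge0 // mxinf_ge0.
move=> i j; rewrite mxE; apply: le_trans (ler_normD _ _) _.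
by rewrite lerD // mxinf_entry.
Qed.

Lemma mxinfN p q (X : 'M[R]_(p, q)) : mxinf (- X) <= mxinf X.
Proof.
apply: mxinf_le; first by rewrite mxinf_ge0.
by move=> i j; rewrite mxE normrN mxinf_entry.
Qed.

Lemma mxinf_mul p n q (X : 'M[R]_(p, n)) (Y : 'M[R]_(n, q)) a c :
  mxinf X <= a -> mxinf Y <= c -> mxinf (X *m Y) <= n%:R * a * c.
Proof.
move=> hX hY.
have a0 : 0 <= a. by apply: (le_trans (mxinf_ge0 X) hX).
have c0 : 0 <= c by exact: le_trans (mxinf_ge0 Y) hY.
apply: mxinf_le; first by rewrite !mulr_ge0.
move=> i j; rewrite mxE; apply: le_trans (ler_norm_sum _ _ _) _.
apply: le_trans (_ : \sum_(l < n) (a * c) <= _).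
  apply: ler_sum => l _; rewrite normrM ler_pM //.
    exact: le_trans (mxinf_entry _ _ _) hX.
  exact: le_trans (mxinf_entry _ _ _) hY.
by rewrite sumr_const card_ord -mulrA mulr_natl.
Qed.

Lemma mxinf_const1 p q : mxinf (const_mx 1 : 'M[R]_(p, q)) <= 1.
Proof. by apply: mxinf_le => // i j; rewrite mxE normr1. Qed.

Lemma mxinf_D (m:nat) : mxinf (Dmx R m) <= m%:R.
Proof.
apply: mxinf_le => // i j; rewrite /Dmx mxE.
case: eqP => [->|_]; last by rewrite mulr0n normr0.
rewrite mulr1n mxE ger0_norm // ler_nat; exact: ltn_ord.
Qed.

Lemma mxinf_box m C (w : 'cV[R]_m) : 0 <= C -> box C w -> mxinf w <= C.
Proof.
move=> C0 hw; apply: mxinf_le => // i j; rewrite (ord1 j).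
by case: (hw i) => h1 h2; rewrite ger0_norm.
Qed.

Lemma mxinf_box1 m C (w : 'cV[R]_m) : 0 <= C -> box C w -> mxinf (w + const_mx 1) <= C + 1.
Proof.
move=> C0 hw; apply: le_trans (mxinfD _ _) _.
by apply: lerD; [exact: mxinf_box | exact: mxinf_const1].
Qed.
End S2.

Section S3.
Variable R : realType.

Lemma infsup_close (S : set R) v r : S !=set0 ->
  (forall s, S s -> `|s - v| <= r) ->
  `|inf S - v| <= r /\ `|sup S - v| <= r.
Proof.
move=> [s0 Ss0] H.
have /andP[l0 u0] : v - r <= s0 <= v + r by rewrite -ler_distl H.
have hl : has_lbound S.
  exists (v - r) => s Ss; have := H s Ss; rewrite ler_distl => /andP[] //.
have hu : has_ubound S.
  exists (v + r) => s Ss; have := H s Ss; rewrite ler_distl => /andP[] //.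
split; rewrite ler_distl; apply/andP; split.
- apply: lb_le_inf; first by exists s0.
  by move=> s Ss; have := H s Ss; rewrite ler_distl => /andP[].
- by apply: le_trans u0; apply: (ge_inf hl).
- by apply: le_trans l0 _; apply: (ub_le_sup hu).
- apply: ge_sup; first by exists s0.
  by move=> s Ss; have := H s Ss; rewrite ler_distl => /andP[].
Qed.

Lemma mxEB p q (X Y : 'M[R]_(p, q)) i j : (X - Y) i j = X i j - Y i j.
Proof. by rewrite !mxE. Qed.

Variables (k m : nat) (A : 'M[R]_(k, m)) (L : 'M[R]_(m, k)) (b : 'cV[R]_k)
  (C : R) (w0 : 'cV[R]_m).
Hypothesis LA : L *m A = 1%:M.
Hypothesis Aw0 : A *m w0 = b.
Hypothesis bw0 : box C w0.
Hypothesis C0 : 0 < C.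
Hypothesis A1 : mxinf A <= 1.

Lemma F0_uniq w : F0 A b C w -> w = w0.
Proof.
move=> [Aw _].
by rewrite -(mul1mx w) -(mul1mx w0) -LA -!mulmxA Aw Aw0.
Qed.

Lemma theta_eq : theta_min A b C = obj A w0 /\ theta_max A b C = obj A w0.
Proof.
rewrite /theta_min /theta_max.
have -> : [set obj A w | w in F0 A b C] = [set obj A w0].
  apply/seteqP; split => x /=.
    by move=> [w /F0_uniq -> <-].
  move=> ->; exists w0 => //; split => //.
by rewrite inf1 sup1.
Qed.

Variables (Ah : 'M[R]_(k, m)) (bh : 'cV[R]_k) (dl t : R).
Hypothesis hA : mxinf (Ah - A) <= dl.
Hypothesis hb : mxinf (bh - b) <= dl.
Hypothesis t0 : 0 < t.

Let Sm := [set mxinf (Ah *m w - bh) | w in box C].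

Lemma Sm_inf : has_inf Sm.
Proof.
split; first by exists (mxinf (Ah *m w0 - bh)), w0.
by exists 0 => x [w _ <-]; apply: mxinf_ge0.
Qed.

Lemma mhat_le : mhat Ah bh C <= m%:R * dl * C + dl.
Proof.
have := ge_inf (proj2 Sm_inf) (_ : Sm (mxinf (Ah *m w0 - bh))).
move=> /(_ _) h; apply: le_trans (h _) _; first by exists w0.
have -> : Ah *m w0 - bh = (Ah - A) *m w0 + - (bh - b).
  by rewrite mulmxBl Aw0 opprB addrA subrK.
apply: le_trans (mxinfD _ _) _; apply: lerD.
  apply: mxinf_mul => //; apply: mxinf_box => //; exact: ltW.
exact: le_trans (mxinfN _) hb.
Qed.

Lemma Fhat_nonempty : Fhat Ah bh C t !=set0.
Proof.
have [e [w bw <-] he] := inf_adherent t0 Sm_inf.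
exists w; split => //; exact: ltW.
Qed.

Let e := 2 * (m%:R * dl * C + dl) + t.

Lemma Fhat_close w : Fhat Ah bh C t w -> mxinf (w - w0) <= k%:R * mxinf L * e.
Proof.
move=> [hw bw].
have -> : w - w0 = L *m (A *m w - b).
  by rewrite mulmxBr mulmxA LA mul1mx -Aw0 mulmxA LA mul1mx.
apply: mxinf_mul => //.
have -> : A *m w - b = (Ah *m w - bh) + - ((Ah - A) *m w) + (bh - b).
  rewrite mulmxBl; move: (A *m w) (Ah *m w) => x y.
  by apply/matrixP=> i j; rewrite !mxE; ring.
apply: le_trans (mxinfD _ _) _.
apply: le_trans (lerD (mxinfD _ _) (lexx _)) _.
have h1 := mhat_le.
have h2 : mxinf (- ((Ah - A) *m w)) <= m%:R * dl * C.
  apply: le_trans (mxinfN _) _; apply: mxinf_mul => //; apply: mxinf_box => //; exact: ltW.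
have H := lerD (lerD hw h2) hb.
rewrite /e; move: H h1.
move: (mhat Ah bh C) (m%:R * dl * C) (mxinf (Ah *m w - bh) + _ + _) => y z s H h1.
lra.
Qed.


Definition bnd := m%:R * (m%:R * (k%:R * 1 * dl) * m%:R) * (C + 1) +
  m%:R * (m%:R * (k%:R * 1 * 1) * m%:R) * (k%:R * mxinf L * e).

Lemma obj_close w : Fhat Ah bh C t w -> `|obj Ah w - obj A w0| <= bnd.
Proof.
move=> hw; have [_ bw] := hw.
have hwc := Fhat_close hw.
pose u1 := (const_mx 1 : 'rV[R]_k) *m (Ah - A) *m Dmx R m *m (w + const_mx 1).
pose u2 := (const_mx 1 : 'rV[R]_k) *m A *m Dmx R m *m (w - w0).
have -> : obj Ah w - obj A w0 = (u1 + u2) 0 0.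
  rewrite /obj /u1 /u2 -mxEB.
  congr (fun_of_matrix _ 0 0).
  rewrite !(mulmxDr, mulmxDl, mulmxN, mulNmx).
  by apply/matrixP=> i j; rewrite !mxE; ring.
apply: le_trans (mxinf_entry _ _ _) _.
apply: le_trans (mxinfD _ _) _.
apply: lerD.
  apply: mxinf_mul; last by apply: mxinf_box1 => //; exact: ltW.
  apply: mxinf_mul; last exact: mxinf_D.
  by apply: mxinf_mul; [exact: mxinf_const1|].
apply: mxinf_mul; last exact: hwc.
apply: mxinf_mul; last exact: mxinf_D.
by apply: mxinf_mul; [exact: mxinf_const1|].
Qed.

Lemma thetahat_close :
  `|thetahat_min Ah bh C t - theta_min A b C| <= bnd /\
  `|thetahat_max Ah bh C t - theta_max A b C| <= bnd.
Proof.
have [-> ->] := theta_eq.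
rewrite /thetahat_min /thetahat_max. apply: infsup_close.
  have [w hw] := Fhat_nonempty; by exists (obj Ah w), w.
by move=> s [w hw <-]; apply: obj_close.
Qed.

End S3.

Unset Implicit Arguments.

Theorem theorem3 (R : realType) (k m : nat)
  (A : 'M[R]_(k, m)) (b : 'cV[R]_k) (C : R)
  (d : measure_display) (T : measurableType d) (P : probability T R)
  (Ahat : nat -> T -> 'M[R]_(k, m)) (bhat : nat -> T -> 'cV[R]_k)
  (kappa : nat -> R) :
  (forall i j, 0 <= A i j <= 1) ->
  (forall i, 0 <= b i 0 <= 1) ->
  0 < C ->
  F0 A b C !=set0 ->
  Op P (fun n om => mxinf (Ahat n om - A)) (@rate R) ->
  Op P (fun n om => mxinf (bhat n om - b)) (@rate R) ->
  \rank A = m ->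
  (forall n, 0 < kappa n) ->
  (exists K : R, forall n, kappa n <= K) ->
  Op P (fun n om => thetahat_min (Ahat n om) (bhat n om) C
                      (kappa n / Num.sqrt (n%:R)) - theta_min A b C) (@rate R) /\
  Op P (fun n om => thetahat_max (Ahat n om) (bhat n om) C
                      (kappa n / Num.sqrt (n%:R)) - theta_max A b C) (@rate R).
Proof.
move=> hA01 _ C0 [w0 [Aw0 bw0]] OA Ob rk kpos [K hK].
pose L := pinvmx A.
have LA : L *m A = 1%:M by apply: mulVpmx; rewrite /row_full rk.
have A1 : mxinf A <= 1.
  apply: mxinf_le => // i j; have /andP[h1 h2] := hA01 i j.
  by rewrite ger0_norm.
have K0 : 0 <= K by apply: le_trans (hK 0%N); apply: ltW.
suff main : forall eps : R, 0 < eps -> exists Mb : R, exists N : nat,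
    forall n, (N <= n)%N -> exists E : set T,
      measurable E /\ (P (~` E) <= eps%:E)%E /\
      forall om, E om ->
       `|thetahat_min (Ahat n om) (bhat n om) C (kappa n / Num.sqrt (n%:R)) - theta_min A b C|
          <= Mb * rate R n /\
       `|thetahat_max (Ahat n om) (bhat n om) C (kappa n / Num.sqrt (n%:R)) - theta_max A b C|
          <= Mb * rate R n.
  split=> eps /main [Mb [N HN]]; exists Mb, N => n /HN [E [mE [PE HE]]];
    exists E; (split; [done | split; [done | by move=> om /HE []]]).
move=> eps eps0.
have e2 : 0 < eps / 2 by rewrite divr_gt0.
have [M1 [N1 H1]] := OA _ e2.
have [M2 [N2 H2]] := Ob _ e2.
pose D := `|M1| + `|M2|.
exists (bnd L C D K), (maxn (maxn N1 N2) 1).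
move=> n; rewrite !geq_max => /andP[/andP[n1 n2] n0].
have [E1 [mE1 [PE1 HE1]]] := H1 n n1.
have [E2 [mE2 [PE2 HE2]]] := H2 n n2.
exists (E1 `&` E2); split; first exact: measurableI.
split.
  rewrite setCI; apply: le_trans (measureU2 _ _ _) _.
  - exact: measurableC.
  - exact: measurableC.
  apply: le_trans (leeD PE1 PE2) _.
  by rewrite -EFinD lee_fin; lra.
move=> om [ho1 ho2].
have r0 : 0 < rate R n.
  by rewrite /rate invr_gt0 sqrtr_gt0 ltr0n.
have ht : 0 < kappa n / Num.sqrt (n%:R) by rewrite mulr_gt0.
have hA : mxinf (Ahat n om - A) <= D * rate R n.
  have := HE1 om ho1; rewrite ger0_norm ?mxinf_ge0 // => h.
  apply: le_trans h _; apply: ler_wpM2r; first exact: ltW.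
  by apply: le_trans (ler_norm _) _; rewrite lerDl normr_ge0.
have hb : mxinf (bhat n om - b) <= D * rate R n.
  have := HE2 om ho2; rewrite ger0_norm ?mxinf_ge0 // => h.
  apply: le_trans h _; apply: ler_wpM2r; first exact: ltW.
  by apply: le_trans (ler_norm _) _; rewrite lerDr normr_ge0.
have [h1 h2] := thetahat_close LA Aw0 bw0 C0 A1 hA hb ht.
have hb2 : bnd L C (D * rate R n) (kappa n / Num.sqrt (n%:R)) <= bnd L C D K * rate R n.
  have -> : bnd L C (D * rate R n) (kappa n / Num.sqrt (n%:R)) =
            bnd L C D (kappa n) * rate R n by rewrite /bnd /rate; ring.
  apply: ler_wpM2r; first exact: ltW.
  rewrite /bnd lerD2l; apply: ler_wpM2l; first by rewrite !mulr_ge0 ?ler0n // ?mxinf_ge0.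
  apply: ler_wpM2l; first by rewrite !mulr_ge0 ?ler0n ?mxinf_ge0.
  by rewrite lerD2l.
by split; apply: le_trans hb2.
Qed.
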